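(* Let $n\in\mathbb{N}$ and let $E$ be a symmetric function space on $(0,\infty)$. If $E^0\cap L_\infty\subset L_{n,1}$, then $E\cap L_\infty\subset L_{n,1}$.
   Context: A symmetric function space on $(0,\infty)$ is a Banach space $E$ of real-valued measurable functions such that whenever $y\in E$ and $x$ is measurable with $\mu(x)\le\mu(y)$ ($\mu$ = decreasing rearrangement of the absolute value), then $x\in E$ and $\|x\|_E\le\|y\|_E$. $E^0$ is the closure of $L_1\cap L_\infty$ in $E$. $L_{n,1}$ is the Lorentz space of measurable $f$ with $\|f\|_{L_{n,1}}=\int_0^\infty\mu(t;f)\,d(t^{1/n})<\infty$. *)

(* Defs.v *)
From mathcomp Require Import all_boot all_order all_algebra.
From mathcomp Require Import all_classical all_reals all_analysis.
Import Order.TTheory GRing.Theory Num.Theory.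

Set Implicit Arguments.
Unset Strict Implicit.
Unset Printing Implicit Defensive.

Local Open Scope classical_set_scope.
Local Open Scope ring_scope.

(* Carrier of the (completed) Lebesgue sigma-algebra on R: definitionally R. *)
Notation LR R := (caratheodory_type (R:=R) (wlength (R:=R) idfun)^*%mu).

Definition lam {R : realType} : set (LR R) -> \bar R :=
  @completed_lebesgue_measure R.

(* The half-line (0, oo). Functions are R -> R; only values on (0,oo) matter. *)
Definition pos_half {R : realType} : set (LR R) := [set t : R | 0 < t].

Definition lmeas {R : realType} (f : R -> R) : Prop :=
  measurable_fun (pos_half : set (LR R)) (f : LR R -> R).

Definition dist_fun {R : realType} (f : R -> R) (s : R) : \bar R :=
  lam ([set t : R | 0 < t /\ s < `|f t|] : set (LR R)).

Definition rearr {R : realType} (f : R -> R) (t : R) : \bar R :=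
  ereal_inf [set s%:E | s in [set s : R | 0 <= s /\ (dist_fun f s <= t%:E)%E]].

Definition Linfty {R : realType} (f : R -> R) : Prop :=
  lmeas f /\ exists C : R, dist_fun f C = 0%E.

Definition L1 {R : realType} (f : R -> R) : Prop :=
  lmeas f /\ (\int[lam]_(t in (pos_half : set (LR R))) (`|f t|)%:E < +oo)%E.

(* ||f||_{L_{n,1}} = int_0^oo mu(t;f) d(t^{1/n})
                   = int_0^oo mu(t;f) (1/n) t^{1/n - 1} dt *)
Definition Ln1_norm {R : realType} (n : nat) (f : R -> R) : \bar R :=
  (\int[lam]_(t in (pos_half : set (LR R)))
     (rearr f t * ((n%:R)^-1 * powR t ((n%:R)^-1 - 1))%:E))%E.

Definition Ln1 {R : realType} (n : nat) (f : R -> R) : Prop :=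
  lmeas f /\ (Ln1_norm n f < +oo)%E.

(* A symmetric function space on (0,oo): a set E of measurable functions with
   a norm nrm making it a Banach space (functions identified a.e.), such that
   mu(x) <= mu(y), y in E, x measurable  ==>  x in E and ||x|| <= ||y||. *)
Record symmetric_function_space {R : realType}
    (E : set (R -> R)) (nrm : (R -> R) -> R) : Prop := {
  sfs_meas : forall x, E x -> lmeas x;
  sfs_zero : E (fun _ => 0);
  sfs_add : forall x y, E x -> E y -> E (fun t => x t + y t);
  sfs_scale : forall (c : R) x, E x -> E (fun t => c * x t);
  sfs_triangle : forall x y, E x -> E y ->
    nrm (fun t => x t + y t) <= nrm x + nrm y;
  sfs_homog : forall (c : R) x, E x -> nrm (fun t => c * x t) = `|c| * nrm x;
  sfs_definite : forall x, E x -> nrm x = 0 -> dist_fun x 0 = 0%E;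
  sfs_complete : forall u : nat -> R -> R, (forall k, E (u k)) ->
    (forall e : R, 0 < e -> exists N : nat, forall m k : nat,
        (N <= m)%N -> (N <= k)%N -> nrm (fun t => u m t - u k t) < e) ->
    exists x, E x /\ (forall e : R, 0 < e -> exists N : nat, forall k : nat,
        (N <= k)%N -> nrm (fun t => u k t - x t) < e);
  sfs_sym : forall x y, E y -> lmeas x ->
    (forall t : R, 0 < t -> (rearr x t <= rearr y t)%E) ->
    E x /\ nrm x <= nrm y
}.

Definition E0 {R : realType} (E : set (R -> R)) (nrm : (R -> R) -> R)
    (x : R -> R) : Prop :=
  E x /\ forall e : R, 0 < e -> exists y, [/\ E y, L1 y, Linfty y &
     nrm (fun t => x t - y t) < e].

(* Main.v *)
Require Import Defs.
From mathcomp Require Import all_boot all_order all_algebra.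
From mathcomp Require Import all_classical all_reals all_analysis.
From mathcomp Require Import measurable_realfun.
Import Order.TTheory GRing.Theory Num.Theory.
Set Implicit Arguments.
Unset Strict Implicit.
Unset Printing Implicit Defensive.
Local Open Scope classical_set_scope.
Local Open Scope ring_scope.

Section S.
Context {R : realType}.

Lemma lamE (A : set R) : lam (A : set (LR R)) = lebesgue_measure A.
Proof. reflexivity. Qed.

Lemma lam_le (A B : set R) : A `<=` B -> (lam (A : set (LR R)) <= lam (B : set (LR R)))%E.
Proof. move=> AB. exact: le_outer_measure. Qed.

Lemma borel_cara (A : set R) : measurable A -> measurable (A : set (LR R)).
Proof. move=> mA. exact: (@sub_caratheodory _ (ocitv_type R) R (wlength idfun) A mA). Qed.

Lemma pos_half_itv : (pos_half : set R) = `]0, +oo[%classic.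
Proof. by apply/seteqP; split=> u /=; rewrite in_itv /= andbT. Qed.

Lemma mpos : measurable (pos_half : set (LR R)).
Proof. apply: borel_cara; rewrite pos_half_itv; exact: measurable_itv. Qed.

Lemma borel_lmeas (f : R -> R) : measurable_fun (pos_half : set R) f -> lmeas f.
Proof.
move=> mf _ Y mY; apply: borel_cara; apply: mf => //.
rewrite pos_half_itv; exact: measurable_itv.
Qed.

Lemma lam_oc (t : R) : 0 < t -> lam (`]0, t]%classic : set (LR R)) = t%:E.
Proof. move=> t0; rewrite lamE lebesgue_measure_itv /= lte_fin t0 /= sube0 //. Qed.
Lemma lam_oo (t : R) : 0 < t -> lam (`]0, t[%classic : set (LR R)) = t%:E.
Proof. move=> t0; rewrite lamE lebesgue_measure_itv /= lte_fin t0 /= sube0 //. Qed.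


Local Open Scope ereal_scope.

Lemma dist_mono_fun (g h : R -> R) s :
  (forall u, (0 < u)%R -> (`|g u| <= `|h u|)%R) -> dist_fun g s <= dist_fun h s.
Proof.
move=> gh; apply: lam_le => u [u0 su]; split => //.
exact: (lt_le_trans su (gh u u0)).
Qed.

Lemma dist_mono_lvl (g : R -> R) s1 s2 : (s1 <= s2)%R -> dist_fun g s2 <= dist_fun g s1.
Proof. move=> s12; apply: lam_le => u [u0 su]; split => //; exact: le_lt_trans su. Qed.

Lemma rearr_ge0 (g : R -> R) t : 0 <= rearr g t.
Proof. by apply: le_ereal_inf_tmp => _ [s [s0 _] <-]; rewrite lee_fin. Qed.

Lemma rearr_lb (g : R -> R) t s : (0 <= s)%R -> dist_fun g s <= t%:E -> rearr g t <= s%:E.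
Proof. by move=> s0 ds; apply: ereal_inf_lbound; exists s. Qed.

Lemma rearr_glb (g : R -> R) t (a : R) :
  (forall s, (0 <= s)%R -> dist_fun g s <= t%:E -> (a <= s)%R) -> a%:E <= rearr g t.
Proof. by move=> H; apply: le_ereal_inf_tmp => _ [s [s0 ds] <-]; rewrite lee_fin; apply: H. Qed.

Lemma rearr_mono_fun (g h : R -> R) t :
  (forall u, (0 < u)%R -> (`|g u| <= `|h u|)%R) -> rearr g t <= rearr h t.
Proof.
move=> gh; apply: le_ereal_inf_tmp => _ [s [s0 ds] <-]; apply: rearr_lb => //.
exact: le_trans (dist_mono_fun _ gh) ds.
Qed.

Lemma rearr_mono_t (g : R -> R) t1 t2 : (t1 <= t2)%R -> rearr g t2 <= rearr g t1.
Proof.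
move=> t12; apply: le_ereal_inf_tmp => _ [s [s0 ds] <-]; apply: rearr_lb => //.
by apply: le_trans ds _; rewrite lee_fin.
Qed.

Lemma rearr_ub_sub (g : R -> R) t s : (0 < t)%R -> (0 <= s)%R ->
  (forall u, (0 < u)%R -> (s < `|g u|)%R -> (u < t)%R) -> rearr g t <= s%:E.
Proof.
move=> t0 s0 H; apply: rearr_lb => //; rewrite -(lam_oo t0); apply: lam_le.
move=> u [u0 su] /=; rewrite in_itv /= u0 /=; exact: H.
Qed.

Lemma rearr_lb_of (g : R -> R) t (a : R) : (0 < t)%R ->
  (forall s, (0 <= s)%R -> (s < a)%R -> exists2 t', (t < t')%R &
     forall u, (0 < u)%R -> (u <= t')%R -> (s < `|g u|)%R) -> a%:E <= rearr g t.
Proof.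
move=> t0 H; apply: rearr_glb => s s0 ds; rewrite leNgt; apply/negP => sa.
have [t' tt' Ht'] := H s s0 sa.
have t'0 : (0 < t')%R by exact: lt_trans tt'.
have : lam (`]0%R, t']%classic : set (LR R)) <= dist_fun g s.
  apply: lam_le => u /=; rewrite in_itv /= => /andP[u0 ut]; split => //; exact: Ht'.
rewrite lam_oc // => /le_trans /(_ ds); rewrite lee_fin leNgt tt' //.
Qed.


Section phi.
Variables (x : R -> R) (C : R) (hC : dist_fun x C = 0).
Let C' := Num.max C 0%R.

Lemma rearr_x_le t : (0 <= t)%R -> rearr x t <= C'%:E.
Proof.
move=> t0; apply: rearr_lb; first by rewrite /C' le_max lexx orbT.
have CC' : (C <= C')%R by rewrite /C' le_max lexx.
by apply: (le_trans (dist_mono_lvl x CC')); rewrite hC lee_fin.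
Qed.

Definition phi t := fine (rearr x t).

Lemma rearr_x_fin t : (0 <= t)%R -> rearr x t = (phi t)%:E.
Proof.
move=> t0; rewrite /phi fineK // fin_numE.
have := rearr_ge0 x t; have := rearr_x_le t0.
by case: (rearr x t).
Qed.

Lemma phi_ge0 t : (0 <= t)%R -> (0 <= phi t)%R.
Proof. by move=> t0; rewrite -lee_fin -rearr_x_fin // rearr_ge0. Qed.

Lemma phi_le t : (0 <= t)%R -> (phi t <= C')%R.
Proof. by move=> t0; rewrite -lee_fin -rearr_x_fin // rearr_x_le. Qed.

Lemma C'_ge0 : (0 <= C')%R.
Proof. by rewrite /C' le_max lexx orbT. Qed.

Lemma phi_noninc u v : (0 <= u)%R -> (u <= v)%R -> (phi v <= phi u)%R.
Proof.
move=> u0 uv; rewrite -lee_fin -!rearr_x_fin //; last exact: le_trans uv.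
exact: rearr_mono_t.
Qed.

Lemma phi_rc t s : (0 < t)%R -> (s < phi t)%R -> exists2 t', (t < t')%R & (s < phi t')%R.
Proof.
move=> t0 st.
have [s0|s0] := ltP s 0%R.
  exists (t+1)%R; first by rewrite ltrDl.
  by apply: (lt_le_trans s0); apply: phi_ge0; rewrite addr_ge0 // ltW.
apply: contrapT => NH.
have Hle t' : (t < t')%R -> (phi t' <= s)%R.
  by move=> tt'; rewrite leNgt; apply/negP => st'; apply: NH; exists t'.
suff H : forall r, (s < r)%R -> (phi t <= r)%R.
  have [h1 h2] := midf_lt st.
  by have := H _ h1; rewrite leNgt h2.
move=> r sr.
have r0 : (0 <= r)%R by exact: le_trans (ltW sr).
rewrite -lee_fin -rearr_x_fin; last exact: ltW.
apply: rearr_lb => //.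
apply/lee_addgt0Pr => e e0.
have : rearr x (t + e)%R < r%:E.
  rewrite rearr_x_fin; last by rewrite addr_ge0 // ltW.
  by rewrite lte_fin; apply: le_lt_trans sr; apply: Hle; rewrite ltrDl.
move=> /ereal_inf_lt [_ [s'' [s''0 ds''] <-]]; rewrite lte_fin => s''r.
rewrite -EFinD; apply: le_trans ds''; exact: dist_mono_lvl (ltW s''r).
Qed.

Lemma rearr_dom (g : R -> R) (a : R) t : (0 < t)%R -> (0 <= a)%R ->
  (forall u, (0 < u)%R -> (`|g u| <= a * phi u)%R) -> rearr g t <= (a * phi t)%:E.
Proof.
move=> t0 a0 H; apply: rearr_ub_sub => //; first by rewrite mulr_ge0 // phi_ge0 // ltW.
move=> u u0 h; have := lt_le_trans h (H u u0).
rewrite ltNge => /negP h2; rewrite ltNge; apply/negP => tu; apply: h2.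
by apply: ler_wpM2l => //; apply: phi_noninc => //; exact: ltW.
Qed.

Lemma rearr_scale (c : R) t : (0 < t)%R -> (0 < c)%R ->
  (c * phi t)%:E <= rearr (fun u => c * x u)%R t.
Proof.
move=> t0 c0; apply: rearr_glb => s s0 ds.
rewrite -ler_pdivlMl //.
rewrite -lee_fin -rearr_x_fin; last exact: ltW.
apply: rearr_lb; first by rewrite mulr_ge0 // invr_ge0 ltW.
apply: le_trans ds; apply: lam_le => u [u0 su]; split => //.
by rewrite normrM gtr0_norm // -ltr_pdivrMl.
Qed.

End phi.
Local Close Scope ereal_scope.

Lemma mpos_b : measurable (pos_half : set R).
Proof. rewrite pos_half_itv; exact: measurable_itv. Qed.

Lemma mono_lmeas (g : R -> R) (M : R) :
  (forall u v, 0 < u -> u <= v -> g v <= g u) ->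
  (forall u, 0 < u -> g u <= M) -> lmeas g.
Proof.
move=> gm gM; pose g' u := if 0 < u then g u else M.
apply: borel_lmeas.
apply: (@eq_measurable_fun _ _ _ _ _ g').
  by move=> u; rewrite inE /= /g' => ->.
apply: nonincreasing_measurable; first exact: mpos_b.
move=> u v uv; rewrite /g'.
case: ifP => v0; case: ifP => u0.
- exact: gm.
- exact: gM.
- by rewrite (lt_le_trans u0 uv) in v0.
- exact: lexx.
Qed.

Definition tcut (a : R) (g : R -> R) t := if t < a then g t else 0.
Definition twin (a b : R) (g : R -> R) t := if (a <= t) && (t < b) then g t else 0.

Lemma cut_noninc (a : R) (g : R -> R) :
  (forall u, 0 < u -> 0 <= g u) ->
  (forall u v, 0 < u -> u <= v -> g v <= g u) ->
  (forall u v, 0 < u -> u <= v -> tcut a g v <= tcut a g u).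
Proof.
move=> g0 gm u v u0 uv; rewrite /tcut.
case: ifP => va; first by rewrite (le_lt_trans uv va); exact: gm.
by case: ifP => // _; exact: g0.
Qed.

Lemma in_set_itvE (i : interval R) (t : R) : (t \in [set` i]) = (t \in i).
Proof.
by case: (boolP (t \in i)) => h; [rewrite mem_set | rewrite memNset //; apply/negP].
Qed.

Lemma cutE (a : R) (g : R -> R) : tcut a g = g \* \1_(`]-oo, a[%classic : set R).
Proof.
apply/funext => t; rewrite /tcut /= indicE in_set_itvE in_itv /=.
by case: ifP => _; rewrite ?mulr1 ?mulr0.
Qed.

Lemma winE (a b : R) (g : R -> R) : twin a b g = g \* \1_(`[a, b[%classic : set R).
Proof.
apply/funext => t; rewrite /twin /= indicE in_set_itvE in_itv /=.
by case: ifP => _; rewrite ?mulr1 ?mulr0.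
Qed.

Lemma cut_meas (D : set (LR R)) (a : R) (g : R -> R) :
  measurable_fun D (g : LR R -> R) -> measurable_fun D (tcut a g : LR R -> R).
Proof.
move=> mg; rewrite cutE; apply: measurable_funM => //.
apply: measurable_indic; apply: borel_cara; exact: measurable_itv.
Qed.

Lemma win_meas (D : set (LR R)) (a b : R) (g : R -> R) :
  measurable_fun D (g : LR R -> R) -> measurable_fun D (twin a b g : LR R -> R).
Proof.
move=> mg; rewrite winE; apply: measurable_funM => //.
apply: measurable_indic; apply: borel_cara; exact: measurable_itv.
Qed.

Lemma cut_split (a b : R) (g : R -> R) : a <= b ->
  tcut b g = (fun t => tcut a g t + twin a b g t).
Proof.
move=> ab; apply/funext => t; rewrite /tcut /twin.
case: (ltP t a) => ta /=.
  by rewrite (lt_le_trans ta ab) addr0.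
by rewrite add0r.
Qed.

Local Open Scope ereal_scope.

Lemma le_ge0_int (D : set (LR R)) (f1 f2 : LR R -> \bar R) :
  (forall t, D t -> 0 <= f1 t) -> (forall t, D t -> f1 t <= f2 t) ->
  \int[lam]_(t in D) f1 t <= \int[lam]_(t in D) f2 t.
Proof.
move=> f10 f12.
rewrite !ge0_integralE //; last by move=> t Dt; exact: le_trans (f10 t Dt) (f12 t Dt).
apply: ereal_sup_le => _ [h hf <-]; exists h => //= t.
apply: le_trans (hf t) _; rewrite /patch; case: ifP => // /set_mem; exact: f12.
Qed.

Lemma int_split (G : R -> R) (a b : R) : (a <= b)%R ->
  measurable_fun (pos_half : set (LR R)) (G : LR R -> R) ->
  (forall t, (0 < t)%R -> (0 <= G t)%R) ->
  \int[lam]_(t in (pos_half : set (LR R))) (tcut b G t)%:E =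
  \int[lam]_(t in (pos_half : set (LR R))) (tcut a G t)%:E +
  \int[lam]_(t in (pos_half : set (LR R))) (twin a b G t)%:E.
Proof.
move=> ab mG G0; rewrite (cut_split G ab).
under eq_integral do rewrite EFinD.
apply: ge0_integralD.
- exact: mpos.
- by move=> t t0; rewrite lee_fin /tcut; case: ifP => // _; exact: G0.
- by apply/measurable_EFinP; exact: cut_meas.
- by move=> t t0; rewrite lee_fin /twin; case: ifP => // _; exact: G0.
- by apply/measurable_EFinP; exact: win_meas.
Qed.

Lemma lam0 : lam (set0 : set (LR R)) = 0.
Proof. by rewrite lamE measure0. Qed.

Lemma Linfty_of_bnd (g : R -> R) (M : R) : lmeas g ->
  (forall u, (0 < u)%R -> (`|g u| <= M)%R) -> Linfty g.
Proof.
move=> mg gM; split => //; exists M; rewrite /dist_fun.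
rewrite (_ : [set _ | _] = set0) ?lam0 //.
apply/seteqP; split => // u [u0 /lt_le_trans Mu]; have := Mu _ (gM u u0).
by rewrite ltxx.
Qed.

Lemma L1_of_bnd (g : R -> R) (M b : R) : lmeas g ->
  (forall u, (0 < u)%R -> (`|g u| <= M)%R) ->
  (forall u, (0 < u)%R -> (b <= u)%R -> g u = 0%R) -> L1 g.
Proof.
move=> mg gM gb; split => //.
pose M' := Num.max M 0%R; pose b' := Num.max b 1%R.
have M'0 : (0 <= M')%R by rewrite /M' le_max lexx orbT.
have b'0 : (0 < b')%R by rewrite /b' lt_max ltr01 orbT.
have mI : measurable (`]-oo, b[%classic : set (LR R)).
  by apply: borel_cara; exact: measurable_itv.
apply: (@le_lt_trans _ _ (\int[lam]_(t in (pos_half : set (LR R)))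
    (M'%:E * (\1_(`]-oo, b[%classic : set R) t)%:E))).
  apply: le_ge0_int => t t0 //.
  rewrite indicE in_set_itvE in_itv /=.
  case: (ltP t b) => tb /=.
    by rewrite mule1 lee_fin (le_trans (gM t t0)) // /M' le_max lexx.
  by rewrite gb // normr0 mule0.
rewrite ge0_integralZl_EFin //; first last.
- by apply/measurable_EFinP; exact: measurable_indic.
- exact: mpos.
rewrite integral_indic //; last exact: mpos.
apply: (@le_lt_trans _ _ (M'%:E * b'%:E)); last by rewrite ltry.
apply: lee_wpmul2l; first by rewrite lee_fin.
rewrite -(lam_oc b'0); apply: lam_le => u [] /=; rewrite in_itv /= => ub u0.
by rewrite in_itv /= u0 /= /b' le_max (ltW ub).
Qed.

End S.

Section main.
Context {R : realType}.
Variables (n : nat) (E : set (R -> R)) (nrm : (R -> R) -> R).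
Hypothesis S : symmetric_function_space E nrm.
Hypothesis H : forall y, E0 E nrm y -> Linfty y -> Ln1 n y.
Variables (x : R -> R) (C : R).
Hypothesis Ex : E x.
Hypothesis hC : dist_fun x C = 0%E.
Hypothesis Hinf : Ln1_norm n x = +oo%E.

Local Notation ph := (phi x).
Let C' := Num.max C 0.
Let C'0 : 0 <= C'. Proof. by rewrite /C' le_max lexx orbT. Qed.

Let phi0 t : 0 < t -> 0 <= ph t.
Proof. by move=> t0; apply: (phi_ge0 hC); exact: ltW. Qed.
Let phiC t : 0 < t -> ph t <= C'.
Proof. by move=> t0; apply: (phi_le hC); exact: ltW. Qed.
Let phim u v : 0 < u -> u <= v -> ph v <= ph u.
Proof. by move=> u0 uv; apply: (phi_noninc hC) => //; exact: ltW. Qed.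

Definition W (t : R) : R := n%:R^-1 * powR t (n%:R^-1 - 1).
Definition F t := ph t * W t.

Let W_ge0 t : 0 <= W t.
Proof. by rewrite /W mulr_ge0 // ?invr_ge0 // powR_ge0. Qed.

Let mW : lmeas W.
Proof.
apply: borel_lmeas; apply: measurable_funM; first exact: measurable_cst.
apply: measurable_funS (measurable_powR _) => //.
Qed.

Let mphi : lmeas ph.
Proof. exact: (@mono_lmeas _ ph C'). Qed.

Let mF : lmeas F.
Proof. exact: measurable_funM. Qed.

Let F0 t : 0 < t -> 0 <= F t.
Proof. by move=> t0; rewrite /F mulr_ge0 // phi0. Qed.

Let Ln1x : Ln1_norm n x = (\int[lam]_(t in (pos_half : set (LR R))) (F t)%:E)%E.
Proof.
rewrite /Ln1_norm; apply: eq_integral => t /[!inE] t0.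
by rewrite (rearr_x_fin hC (ltW t0)) /F /W EFinM.
Qed.

Let nrm_zero (g : R -> R) : nrm (fun t => g t - g t) = 0.
Proof.
have -> : (fun t => g t - g t) = (fun t => 0 * (fun _ : R => 0) t).
  by apply/funext => t; rewrite subrr mul0r.
by rewrite (sfs_homog S) ?normr0 ?mul0r //; exact: sfs_zero S.
Qed.

Let E_of_dom g : lmeas g -> (forall u, 0 < u -> `|g u| <= ph u) -> E g.
Proof.
move=> mg gd; have [] // := sfs_sym S Ex mg.
move=> t t0; apply: (le_trans (@rearr_dom _ _ _ hC g 1 t t0 ler01 _)).
  by move=> u u0; rewrite mul1r; exact: gd.
by rewrite mul1r (rearr_x_fin hC (ltW t0)).
Qed.

Let Ln1_lb g : (forall t, 0 < t -> ((g t)%:E <= rearr g t)%E) ->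
  (forall t, 0 < t -> 0 <= g t) ->
  (\int[lam]_(t in (pos_half : set (LR R))) (g t * W t)%:E <= Ln1_norm n g)%E.
Proof.
move=> glb g0; apply: le_ge0_int => t t0.
  by rewrite lee_fin mulr_ge0 // g0.
by rewrite EFinM; apply: lee_wpmul2r; [rewrite lee_fin|exact: glb].
Qed.

Let cut_fin (a : R) :
  (\int[lam]_(t in (pos_half : set (LR R))) (tcut a F t)%:E < +oo)%E.
Proof.
set y := tcut a ph.
have y0 u : 0 < u -> 0 <= y u by move=> u0; rewrite /y /tcut; case: ifP => // _; exact: phi0.
have yle u : 0 < u -> `|y u| <= ph u.
  by move=> u0; rewrite ger0_norm ?y0 // /y /tcut; case: ifP => // _; exact: phi0.
have my : lmeas y.
  apply: (@mono_lmeas _ y C') => [u v u0 uv|u u0].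
    by rewrite /y; exact: (@cut_noninc _ a ph phi0 phim u v u0 uv).
  exact: le_trans (ler_norm _) (le_trans (yle u u0) (phiC u0)).
have Ey := E_of_dom my yle.
have L1y : L1 y.
  apply: (@L1_of_bnd _ y C' a my) => [u u0|u u0 au].
    exact: le_trans (yle u u0) (phiC u0).
  by rewrite /y /tcut ltNge au.
have Liy : Linfty y.
  apply: (@Linfty_of_bnd _ y C' my) => u u0; exact: le_trans (yle u u0) (phiC u0).
have E0y : E0 E nrm y.
  by split => // e e0; exists y; split => //; rewrite nrm_zero.
have [_ fin] := H E0y Liy.
apply: le_lt_trans fin.
have -> : (\int[lam]_(t in (pos_half : set (LR R))) (tcut a F t)%:E =
    \int[lam]_(t in (pos_half : set (LR R))) (y t * W t)%:E)%E.
  by apply: eq_integral => t _; rewrite /y /F /tcut; case: ifP => // _; rewrite mul0r.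
apply: Ln1_lb => // t t0.
apply: rearr_lb_of => // s s0.
rewrite {1}/y /tcut; case: ifP => [ta sy|_]; last by rewrite ltNge s0.
have [t'' tt'' st''] := phi_rc hC t0 sy.
have [m1 m2] := midf_lt ta.
exists (Num.min t'' ((t + a) / 2)); first by rewrite lt_min tt'' m1.
move=> u u0; rewrite le_min => /andP[u1 u2].
have ua : u < a := le_lt_trans u2 m2.
rewrite /y /tcut ua; apply: lt_le_trans st'' _; apply: le_trans (ler_norm _).
exact: phim.
Qed.

Let exists_next (a : nat) (A : R) : exists b : nat, (a < b)%N /\
  (A%:E <= \int[lam]_(t in (pos_half : set (LR R))) (twin a%:R b%:R F t)%:E)%E.
Proof.
set I0 := (\int[lam]_(t in (pos_half : set (LR R))) (tcut a%:R F t)%:E)%E.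
have I0ge0 : (0 <= I0)%E.
  by apply: integral_ge0 => t t0; rewrite lee_fin /tcut; case: ifP => // _; exact: F0.
have I0num : I0 \is a fin_num by rewrite ge0_fin_numE // cut_fin.
have mcut (m : nat) : measurable_fun (pos_half : set (LR R)) (EFin \o tcut m%:R F).
  by apply/measurable_EFinP; exact: cut_meas.
have g'0 (m : nat) t : pos_half t -> (0 <= (tcut m%:R F t)%:E)%E.
  by move=> t0; rewrite lee_fin /tcut; case: ifP => // _; exact: F0.
have nd t : pos_half t -> nondecreasing_seq (fun m : nat => (tcut m%:R F t)%:E).
  move=> t0 m1 m2 m12; rewrite lee_fin /tcut; case: ifP => tm1.
    by rewrite (lt_le_trans tm1) // ler_nat.
  by case: ifP => // _; exact: F0.
have := @cvg_monotone_convergence _ _ _ lam _ mpos (fun m t => (tcut m%:R F t)%:E) mcut g'0 nd.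
have -> : (\int[lam]_(t in (pos_half : set (LR R)))
      limn ((fun m t => (tcut m%:R F t)%:E)^~ t))%E =
    (\int[lam]_(t in (pos_half : set (LR R))) (F t)%:E)%E.
  apply: eq_integral => t _; apply: lim_near_cst => //.
  exists (Num.truncn t).+1 => // m /= hm.
  rewrite /tcut ifT //; apply: lt_le_trans (truncnS_gt t) _.
  by rewrite ler_nat.
rewrite -Ln1x Hinf => /cvgeyPge /(_ (fine I0 + A)) [N _ hN].
pose b := maxn N a.+1.
exists b; split; first by rewrite leq_max ltnSn orbT.
have hb := hN b (leq_maxl N a.+1).
rewrite (@int_split _ F a%:R b%:R) // in hb; first last.
  by rewrite ler_nat (leq_trans (leqnSn a)) // leq_maxr.
by rewrite EFinD fineK // leeD2lE in hb.
Qed.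

Let nextT (k a : nat) : nat := proj1_sig (cid (exists_next a (k.+1)%:R)).
Let nextT_spec k a : (a < nextT k a)%N /\ ((k.+1)%:R%:E <=
  \int[lam]_(t in (pos_half : set (LR R))) (twin a%:R (nextT k a)%:R F t)%:E)%E.
Proof. by rewrite /nextT; case: cid. Qed.

Let T := fix T k := if k is k'.+1 then nextT k' (T k') else 0%N.
Let T_lt k : (T k < T k.+1)%N. Proof. exact: (nextT_spec k (T k)).1. Qed.
Let T_int k : ((k.+1)%:R%:E <=
  \int[lam]_(t in (pos_half : set (LR R))) (twin (T k)%:R (T k.+1)%:R F t)%:E)%E.
Proof. exact: (nextT_spec k (T k)).2. Qed.
Let T_le i d : (T i <= T (i + d))%N.
Proof.
elim: d => [|d IH]; first by rewrite addn0.
by rewrite addnS; exact: leq_trans IH (ltnW (T_lt _)).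
Qed.
Let T_ge k : (k <= T k)%N.
Proof. by elim: k => // k IH; exact: leq_ltn_trans IH (T_lt k). Qed.

Let gg j := \max_(i < j.+1 | (T i <= j)%N) (i : nat).
Let gg_ge k j : (T k <= j)%N -> (k <= gg j)%N.
Proof.
move=> Tk; have kj : (k < j.+1)%N by rewrite ltnS (leq_trans (T_ge k) Tk).
exact: (@leq_bigmax_cond _ (fun i : 'I_j.+1 => (T i <= j)%N)
  (fun i : 'I_j.+1 => nat_of_ord i) (Ordinal kj)).
Qed.
Let gg_le k j : (j < T k.+1)%N -> (gg j <= k)%N.
Proof.
move=> jT; apply/bigmax_leqP => i Ti; rewrite leqNgt; apply/negP => ki.
have := T_le k.+1 (i - k.+1); rewrite subnKC // => h.
by have := leq_ltn_trans (leq_trans h Ti) jT; rewrite ltnn.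
Qed.
Let gg_mono j j' : (j <= j')%N -> (gg j <= gg j')%N.
Proof. by move=> jj; apply/bigmax_leqP => i Ti; apply: gg_ge; exact: leq_trans Ti jj. Qed.

Let c (t : R) : R := ((gg (Num.truncn t)).+1%:R)^-1.
Let c_gt0 t : 0 < c t. Proof. by rewrite /c invr_gt0 ltr0n. Qed.
Let c_le1 t : c t <= 1. Proof. by rewrite /c invf_le1 ?ltr0n // ler1n. Qed.
Let c_noninc u t : 0 <= u -> u <= t -> c t <= c u.
Proof.
move=> u0 ut; rewrite /c lef_pV2 ?posrE ?ltr0n // ler_nat ltnS; apply: gg_mono.
exact: le_truncn.
Qed.
Let c_tail k t : 0 <= t -> (T k)%:R <= t -> c t <= (k.+1%:R)^-1.
Proof.
move=> t0 kt; rewrite /c lef_pV2 ?posrE ?ltr0n // ler_nat ltnS; apply: gg_ge.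
by rewrite truncn_ge_nat.
Qed.
Let c_win k t : 0 <= t -> t < (T k.+1)%:R -> (k.+1%:R)^-1 <= c t.
Proof.
move=> t0 kt; rewrite /c lef_pV2 ?posrE ?ltr0n // ler_nat ltnS; apply: gg_le.
by rewrite truncn_lt_nat.
Qed.
Let c_const t u : 0 <= t -> t <= u -> u < (Num.truncn t).+1%:R -> c u = c t.
Proof.
move=> t0 tu ut; rewrite /c (@truncn_def _ u (Num.truncn t)) //.
by rewrite ut andbT; apply: le_trans tu; rewrite truncn_le.
Qed.

Let z t := c t * ph t.
Let z0 t : 0 < t -> 0 <= z t.
Proof. by move=> t0; rewrite /z mulr_ge0 ?phi0 // ltW. Qed.
Let zle t : 0 < t -> `|z t| <= ph t.
Proof.
move=> t0; rewrite ger0_norm ?z0 // /z -[X in _ <= X]mul1r.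
by apply: ler_wpM2r; [exact: phi0|exact: c_le1].
Qed.
Let zm u v : 0 < u -> u <= v -> z v <= z u.
Proof.
move=> u0 uv; rewrite /z; apply: ler_pM.
- exact: ltW.
- by apply: phi0; exact: lt_le_trans uv.
- by apply: c_noninc => //; exact: ltW.
- exact: phim.
Qed.
Let mz : lmeas z.
Proof.
apply: (@mono_lmeas _ z C') => // u u0.
exact: le_trans (ler_norm _) (le_trans (zle u0) (phiC u0)).
Qed.

Let z_lb t : 0 < t -> ((z t)%:E <= rearr z t)%E.
Proof.
move=> t0; apply: rearr_lb_of => // s s0 sz.
have ct0 := c_gt0 t.
have sc : (c t)^-1 * s < ph t by rewrite ltr_pdivrMl.
have [t'' tt'' st''] := phi_rc hC t0 sc.
have tr : t < (Num.truncn t).+1%:R := truncnS_gt t.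
have [m1 m2] := midf_lt tr.
set t' := Num.min t'' ((t + (Num.truncn t).+1%:R) / 2).
have tt' : t < t' by rewrite lt_min tt'' m1.
exists t' => // u u0; rewrite le_min => /andP[u1 u2].
apply: lt_le_trans (ler_norm _).
have ct' : c t' = c t.
  apply: c_const; [exact: ltW|exact: ltW|].
  by apply: le_lt_trans m2; rewrite /t' ge_min lexx orbT.
have : s < c t * ph t'' by rewrite -ltr_pdivrMl.
move/lt_le_trans; apply; rewrite /z; apply: ler_pM.
- exact: ltW.
- by apply: phi0; exact: lt_trans tt''.
- by rewrite -ct'; apply: c_noninc => //; [exact: ltW|rewrite /t' le_min u1 u2].
- exact: phim.
Qed.

Let E0z : E0 E nrm z.
Proof.
split; first exact: E_of_dom mz zle.
move=> e e0.
have [k hk] : exists k : nat, (k.+1%:R)^-1 * nrm x < e.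
  case: (leP (nrm x) 0) => nx.
    by exists 0%N; rewrite invr1 mul1r; exact: le_lt_trans nx e0.
  exists (Num.truncn (nrm x / e)); rewrite ltr_pdivrMl ?ltr0n //.
  have := truncnS_gt (nrm x / e); rewrite ltr_pdivrMr //.
set y := tcut (T k)%:R z.
have y0 u : 0 < u -> 0 <= y u by move=> u0; rewrite /y /tcut; case: ifP => // _; exact: z0.
have yle u : 0 < u -> `|y u| <= ph u.
  move=> u0; rewrite /y /tcut; case: ifP => _; first exact: zle.
  by rewrite normr0; exact: phi0.
have my : lmeas y.
  apply: (@mono_lmeas _ y C') => [u v u0 uv|u u0].
    by rewrite /y; exact: (@cut_noninc _ (T k)%:R z z0 zm u v u0 uv).
  exact: le_trans (ler_norm _) (le_trans (yle u u0) (phiC u0)).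
exists y; split.
- exact: E_of_dom my yle.
- apply: (@L1_of_bnd _ y C' (T k)%:R my) => [u u0|u u0 au].
    exact: le_trans (yle u u0) (phiC u0).
  by rewrite /y /tcut ltNge au.
- apply: (@Linfty_of_bnd _ y C' my) => u u0; exact: le_trans (yle u u0) (phiC u0).
- pose a : R := (k.+1%:R)^-1.
  have a0 : 0 < a by rewrite /a invr_gt0 ltr0n.
  have mzy : lmeas (fun t => z t - y t) by exact: measurable_funB.
  have hr : forall t : R, 0 < t ->
      (rearr (fun u => (z u - y u)%R) t <= rearr (fun u => (a * x u)%R) t)%E.
    move=> t t0.
    apply: (le_trans (@rearr_dom _ _ _ hC _ a t t0 (ltW a0) _)).
      move=> u u0; rewrite /y /tcut; case: ifP => uk.
        by rewrite subrr normr0 mulr_ge0 ?phi0 // ltW.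
      rewrite subr0 ger0_norm ?z0 // /z; apply: ler_wpM2r; first exact: phi0.
      by apply: c_tail; [exact: ltW|rewrite leNgt uk].
    exact: (rearr_scale hC t0 a0).
  have [_ hle] := sfs_sym S (sfs_scale S a Ex) mzy hr.
  apply: le_lt_trans hle _; rewrite (sfs_homog S) // ger0_norm //; exact: ltW.
Qed.

Let Liz : Linfty z.
Proof.
apply: (@Linfty_of_bnd _ z C' mz) => u u0; exact: le_trans (zle u0) (phiC u0).
Qed.

Lemma no_inf : False.
Proof.
have [_ zfin] := H E0z Liz.
have mzW : lmeas (fun t => z t * W t) by exact: measurable_funM.
have zW0 t : 0 < t -> 0 <= z t * W t by move=> t0; rewrite mulr_ge0 ?z0.
have lb N : (N%:R%:E <= \int[lam]_(t in (pos_half : set (LR R)))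
    (tcut (T N)%:R (fun t => z t * W t) t)%:E)%E.
  elim: N => [|N IH].
    by apply: integral_ge0 => t t0; rewrite lee_fin /tcut; case: ifP => // _; exact: zW0.
  rewrite (@int_split _ (fun t => z t * W t) (T N)%:R (T N.+1)%:R) //; first last.
    by rewrite ler_nat ltnW.
  rewrite -natr1 EFinD; apply: leeD => //.
  apply: (@le_trans _ _ (((N.+1%:R)^-1 * (N.+1%:R))%:E)).
    by rewrite mulVf // pnatr_eq0.
  rewrite EFinM.
  have h1 := @lee_wpmul2l _ ((N.+1%:R)^-1)%:E _ _ _ (T_int N).
  apply: le_trans (h1 _) _; first by rewrite lee_fin invr_ge0 ler0n.
  rewrite -ge0_integralZl_EFin //; first last.
  all: try exact: mpos.
  all: try (by apply/measurable_EFinP; exact: win_meas).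
  all: try (by move=> t t0; rewrite lee_fin /twin; case: ifP => // _; exact: F0).
  all: try (by rewrite invr_ge0 ler0n).
  apply: le_ge0_int => t t0.
    by rewrite -EFinM lee_fin /twin; case: ifP => _; rewrite ?mulr0 // mulr_ge0 ?invr_ge0 ?ler0n ?F0.
  rewrite -EFinM lee_fin /twin; case: ifP => [/andP[_ h2]|_]; last by rewrite mulr0.
  rewrite /F /z mulrA; apply: ler_wpM2r => //; apply: ler_wpM2r; first exact: phi0.
  by apply: c_win => //; exact: ltW.
have Lz := Ln1_lb z_lb z0.
have r0 : (0 <= Ln1_norm n z)%E.
  by apply: integral_ge0 => t t0; rewrite mule_ge0 ?rearr_ge0 // lee_fin mulr_ge0 ?invr_ge0 ?ler0n ?powR_ge0.
have rnum : Ln1_norm n z \is a fin_num by rewrite ge0_fin_numE.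
set N := (Num.truncn (fine (Ln1_norm n z))).+1.
have := lb N.
move/le_trans => /(_ _ (le_trans _ Lz)).
have h : (\int[lam]_(t in (pos_half : set (LR R))) (tcut (T N)%:R (fun t => z t * W t) t)%:E
    <= \int[lam]_(t in (pos_half : set (LR R))) (z t * W t)%:E)%E.
  apply: le_ge0_int => t t0; rewrite lee_fin /tcut; case: ifP => // _; exact: zW0.
move=> /(_ h); rewrite -(fineK rnum) lee_fin leNgt => /negP; apply.
exact: truncnS_gt.
Qed.

End main.

Theorem lemma5p8 (R : realType) (n : nat) (E : set (R -> R))
    (nrm : (R -> R) -> R) :
  (0 < n)%N ->
  symmetric_function_space E nrm ->
  (forall x, E0 E nrm x -> Linfty x -> Ln1 n x) ->
  forall x, E x -> Linfty x -> Ln1 n x.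
Proof.
move=> _ S H x Ex [mx [C hC]]; split => //.
case: (ltP (Ln1_norm n x) +oo%E) => // h.
exfalso; apply: (no_inf S H Ex hC).
by apply/eqP; rewrite eq_le leey h.
Qed.
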